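(* Let $a,b,c,d\in\mathbb{R}^2$ be points such that the segments $ab$ and $cd$ cross at a point $x$. Suppose that $|ab|\ge 2$, $|cd|\ge 2$, $|ax|\le|xb|$, $|cx|\le |xd|$, and $\angle axc\le 1^\circ$. Then $\max\{|ab|,|cd|\}\ge \max\{|ac|,|bd|\}+0.5$.
   Context: $|uv|$ denotes the Euclidean distance between points $u,v$. *)

(* Defs.v *)
From Stdlib Require Import Reals Lra.
Open Scope R_scope.

Definition pt := (R * R)%type.

Definition edist (u v : pt) : R :=
  sqrt ((fst u - fst v)^2 + (snd u - snd v)^2).

Definition in_open_seg (x u v : pt) : Prop :=
  exists s : R, 0 < s < 1 /\
    x = ((1 - s) * fst u + s * fst v, (1 - s) * snd u + s * snd v).

(* The segments ab and cd cross at x: x is an interior point of both,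
   and the segments are not parallel (so x is their unique common point). *)
Definition segs_cross_at (a b c d x : pt) : Prop :=
  in_open_seg x a b /\ in_open_seg x c d /\
  (fst b - fst a) * (snd d - snd c) - (snd b - snd a) * (fst d - fst c) <> 0.

Definition angle (u x v : pt) : R :=
  acos (((fst u - fst x) * (fst v - fst x) + (snd u - snd x) * (snd v - snd x))
        / (edist u x * edist v x)).

(* Main.v *)
Require Import Defs.
From Stdlib Require Import Reals Lra Psatz.
Open Scope R_scope.
Lemma sqrt_le_of X Y : 0 <= Y -> X <= Y*Y -> sqrt X <= Y.
Proof. intros. rewrite <- (sqrt_square Y) by lra. apply sqrt_le_1_alt. lra. Qed.

Lemma tri1 al be M k : 0 <= al <= M/2 -> 0 <= be <= M/2 -> 2 <= M -> 1/2 <= k ->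
  al*al + be*be - 2*k*al*be <= (M - 1/2)*(M-1/2).
Proof.
  intros. assert (al*be*(2*k-1) >= 0) by (apply Rle_ge; repeat apply Rmult_le_pos; lra).
  destruct (Rle_dec al be).
  - assert (al*al <= al*be) by nra. assert (be*be <= M/2*(M/2)) by nra. nra.
  - assert (be*be <= al*be) by nra. assert (al*al <= M/2*(M/2)) by nra. nra.
Qed.

Lemma tri2 al be M k : 1 <= al <= M -> 1 <= be <= M -> 9/10 <= k ->
  al*al + be*be - 2*k*al*be <= (M - 1/2)*(M-1/2).
Proof.
  intros.
  assert (forall p q, 1 <= q <= p -> p <= M -> p*p + q*q - 2*k*p*q <= (M-1/2)*(M-1/2)).
  { intros p q [Hq Hqp] HpM.
    assert (p*q*(k - 9/10) >= 0) by (apply Rle_ge; repeat apply Rmult_le_pos; lra).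
    assert (q*q + p*(1 - 18/10*q) - 1/4 <= 0).
    { assert (p*(1-18/10*q) <= q*(1-18/10*q)) by nra. nra. }
    nra. }
  destruct (Rle_dec be al).
  - apply H2; lra.
  - replace (al*al + be*be - 2*k*al*be) with (be*be + al*al - 2*k*be*al) by ring. apply H2; lra.
Qed.
Lemma cos_small : 9/10 <= cos (PI/180).
Proof.
  pose proof PI_4. pose proof PI_RGT_0.
  destruct (cos_bound (PI/180) 0) as [H1 _]; try lra.
  unfold cos_approx, cos_term in H1. simpl in H1.
  eapply Rle_trans; [|exact H1]. nra.
Qed.
Lemma acos_ge y : acos y <= PI/180 -> 9/10 <= y.
Proof.
  intro H. pose proof cos_small. pose proof PI_RGT_0.
  destruct (Rle_dec y (-1)).
  { unfold acos in H. destruct (Rle_dec y (-1)); [lra|contradiction]. }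
  destruct (Rle_dec 1 y). lra.
  assert (E: cos (acos y) = y) by (apply cos_acos; lra).
  pose proof (acos_bound y).
  destruct (Req_dec (acos y) (PI/180)) as [e|ne].
  - rewrite e in E. lra.
  - assert (cos (PI/180) < cos (acos y)) by (apply cos_decreasing_1; lra). lra.
Qed.

Lemma divmul g w : w <> 0 -> g / w * w = g.
Proof. intros; field; auto. Qed.

Lemma dist_scale k u1 u2 : 0 <= k -> sqrt ((k*u1)^2 + (k*u2)^2) = k * sqrt (u1^2+u2^2).
Proof.
  intros. replace ((k*u1)^2 + (k*u2)^2) with ((k*k)*(u1^2+u2^2)) by ring.
  rewrite sqrt_mult_alt by nra. rewrite sqrt_square by lra. reflexivity.
Qed.

Theorem lemma1 (a b c d x : pt) :
  segs_cross_at a b c d x ->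
  edist a b >= 2 -> edist c d >= 2 ->
  edist a x <= edist x b -> edist c x <= edist x d ->
  angle a x c <= PI / 180 ->
  Rmax (edist a b) (edist c d) >= Rmax (edist a c) (edist b d) + 0.5.
Proof.
  destruct a as [a1 a2], b as [b1 b2], c as [c1 c2], d as [d1 d2], x as [x1 x2].
  intros [[s [Hs Ex]] [[t [Ht Ey]] _]] Hab Hcd Hax Hcx Hang.
  unfold angle, edist in *; cbn [fst snd] in *.
  injection Ex as Ex1 Ex2. injection Ey as Ey1 Ey2.
  set (W := sqrt ((a1 - b1)^2 + (a2-b2)^2)) in *.
  set (Z := sqrt ((c1 - d1)^2 + (c2-d2)^2)) in *.
  assert (EW : W*W = (a1-b1)^2 + (a2-b2)^2) by (apply sqrt_sqrt; apply Rplus_le_le_0_compat; apply pow2_ge_0).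
  assert (EZ : Z*Z = (c1-d1)^2 + (c2-d2)^2) by (apply sqrt_sqrt; apply Rplus_le_le_0_compat; apply pow2_ge_0).
  assert (Eax : sqrt ((a1 - x1)^2 + (a2-x2)^2) = s * W).
  { unfold W, Z; rewrite <- dist_scale by lra. f_equal. rewrite Ex1, Ex2. ring. }
  assert (Exb : sqrt ((x1 - b1)^2 + (x2-b2)^2) = (1-s) * W).
  { unfold W, Z; rewrite <- dist_scale by lra. f_equal. rewrite Ex1, Ex2. ring. }
  assert (Ecx : sqrt ((c1 - x1)^2 + (c2-x2)^2) = t * Z).
  { unfold W, Z; rewrite <- dist_scale by lra. f_equal. rewrite Ey1, Ey2. ring. }
  assert (Exd : sqrt ((x1 - d1)^2 + (x2-d2)^2) = (1-t) * Z).
  { unfold W, Z; rewrite <- dist_scale by lra. f_equal. rewrite Ey1, Ey2. ring. }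
  rewrite Eax, Exb in Hax. rewrite Ecx, Exd in Hcx. rewrite Eax, Ecx in Hang.
  assert (F1 : a1 - x1 = s*(a1-b1)) by (rewrite Ex1; ring).
  assert (F2 : a2 - x2 = s*(a2-b2)) by (rewrite Ex2; ring).
  assert (F3 : c1 - x1 = t*(c1-d1)) by (rewrite Ey1; ring).
  assert (F4 : c2 - x2 = t*(c2-d2)) by (rewrite Ey2; ring).
  assert (W0 : W <> 0) by lra. assert (Z0 : Z <> 0) by lra.
  set (G := (a1-b1)*(c1-d1) + (a2-b2)*(c2-d2)).
  assert (Hs2 : s <= 1/2) by nra. assert (Ht2 : t <= 1/2) by nra.
  apply acos_ge in Hang.
  assert (HG : 9/10 * (W*Z) <= G).
  { assert (E: ((a1 - x1) * (c1 - x1) + (a2 - x2) * (c2 - x2)) / (s * W * (t * Z)) = G / (W*Z)).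
    { rewrite F1, F2, F3, F4. unfold G. field. repeat split; nra. }
    rewrite E in Hang. apply Rmult_le_compat_r with (r := W*Z) in Hang; [|nra].
    assert (G/(W*Z)*(W*Z) = G) by (apply divmul; apply Rmult_integral_contrapositive_currified; assumption). assert (0 <= W*Z) by nra. lra. }
  set (M := Rmax W Z).
  assert (HM : W <= M /\ Z <= M /\ 2 <= M) by (unfold M; split; [apply Rmax_l|split;[apply Rmax_r|]]; apply Rle_trans with W; [lra|apply Rmax_l]).
  assert (Hac : sqrt ((a1 - c1)^2 + (a2-c2)^2) <= M - 1/2).
  { apply sqrt_le_of; [lra|].
    replace ((a1 - c1)^2 + (a2-c2)^2) with ((s*W)*(s*W) + (t*Z)*(t*Z) - 2*(G/(W*Z))*(s*W)*(t*Z)).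
    - destruct HM as [HM1 [HM2 HM3]]. apply tri1; [split; nra|split; nra|lra|]. apply Rmult_le_reg_r with (W*Z); [nra|].
      assert (G/(W*Z)*(W*Z) = G) by (apply divmul; apply Rmult_integral_contrapositive_currified; assumption). assert (0 <= W*Z) by nra. lra.
    - replace ((s*W)*(s*W) + (t*Z)*(t*Z) - 2*(G/(W*Z))*(s*W)*(t*Z)) with (s*s*(W*W) + t*t*(Z*Z) - 2*s*t*G) by (field; auto).
      rewrite EW, EZ. replace (a1 - c1) with ((a1-x1) - (c1-x1)) by ring.
      replace (a2 - c2) with ((a2-x2) - (c2-x2)) by ring.
      rewrite F1, F2, F3, F4. unfold G. ring. }
  assert (Hbd : sqrt ((b1 - d1)^2 + (b2-d2)^2) <= M - 1/2).
  { apply sqrt_le_of; [lra|].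
    replace ((b1 - d1)^2 + (b2-d2)^2) with (((1-s)*W)*((1-s)*W) + ((1-t)*Z)*((1-t)*Z) - 2*(G/(W*Z))*((1-s)*W)*((1-t)*Z)).
    - destruct HM as [HM1 [HM2 HM3]]. apply tri2; [split; nra|split; nra|].
      apply Rmult_le_reg_r with (W*Z); [nra|].
      assert (G/(W*Z)*(W*Z) = G) by (apply divmul; apply Rmult_integral_contrapositive_currified; assumption). assert (0 <= W*Z) by nra. lra.
    - replace (((1-s)*W)*((1-s)*W) + ((1-t)*Z)*((1-t)*Z) - 2*(G/(W*Z))*((1-s)*W)*((1-t)*Z)) with ((1-s)*(1-s)*(W*W) + (1-t)*(1-t)*(Z*Z) - 2*(1-s)*(1-t)*G) by (field; auto).
      rewrite EW, EZ. replace (b1 - d1) with ((a1-x1) - (c1-x1) - (a1-b1) + (c1-d1)) by ring.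
      replace (b2 - d2) with ((a2-x2) - (c2-x2) - (a2-b2) + (c2-d2)) by ring.
      rewrite F1, F2, F3, F4. unfold G. ring. }
  fold M. assert (Rmax (sqrt ((a1 - c1) ^ 2 + (a2 - c2) ^ 2)) (sqrt ((b1 - d1) ^ 2 + (b2 - d2) ^ 2)) <= M - 1/2) by (apply Rmax_lub; lra). lra.
Qed.
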